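(* Let $m_0,r\ge 0$ and $m$ be integers with $0\le m\le m_0+r$, and let $X\sim\mathrm{Hyper}(m_0,r;m)$, i.e. $\mathbb P(X=k)=\binom{m_0}{k}\binom{r}{m-k}\big/\binom{m_0+r}{m}$. Then $$\mathbb E\left[\frac{X}{1+m-X}\cdot\frac{r+X-m}{1+m_0-X}\right]=1-\frac{\binom{m_0}{m_0\wedge m}\binom{r}{m-m_0\wedge m}}{\binom{m_0+r}{m}}.$$ In particular this expectation is at most $1$ for every $m$.
   Context: $a\wedge b=\min(a,b)$. Binomial coefficient conventions: $\binom{0}{0}=1$, and $\binom{n}{k}=0$ if $n<0$, or if $k<0$, or if $k>n$. *)

(* Defs.v *)
From mathcomp Require Import all_boot all_order all_algebra.
Set Implicit Arguments. Unset Strict Implicit. Unset Printing Implicit Defensive.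
Import Order.TTheory GRing.Theory Num.Theory.
Local Open Scope ring_scope.

Definition hyper_pmf (m0 r m k : nat) : rat :=
  ('C(m0, k) * 'C(r, m - k))%:R / ('C(m0 + r, m))%:R.

Definition hyper_g (m0 r m k : nat) : rat :=
  (k%:R / (1 + m%:R - k%:R)) * ((r%:R + k%:R - m%:R) / (1 + m0%:R - k%:R)).

(* E[g(X)]: X takes values in {0,..,m}; atoms outside the support have
   probability zero. *)
Definition hyper_expect (m0 r m : nat) (g : nat -> rat) : rat :=
  \sum_(k < m.+1) hyper_pmf m0 r m k * g k.

(* Main.v *)
Require Import Defs.
From mathcomp Require Import all_boot all_order all_algebra.
From mathcomp Require Import zify ring lra.
Import Order.TTheory GRing.Theory Num.Theory.
Local Open Scope ring_scope.

Definition F (m0 r m k : nat) : nat :=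
  if (0 < k <= m0)%N then ('C(m0, k.-1) * 'C(r, (m - k).+1))%N else 0%N.

Lemma term_eq m0 r m k : (m <= m0 + r)%N -> (k <= m)%N ->
  hyper_pmf m0 r m k * hyper_g m0 r m k = (F m0 r m k)%:R / ('C(m0 + r, m))%:R.
Proof.
move=> hm; have hB : ('C(m0 + r, m)%:R : rat) != 0 by rewrite pnatr_eq0 -lt0n bin_gt0.
move: hB; rewrite /hyper_pmf /hyper_g /F; move: ('C(m0 + r, m))%:R => B hB.
case: k => [|k] hk; first by rewrite /= !mul0r mulr0.
case: (leqP k.+1 m0) => hk0 /=; last first.
  by rewrite bin_small // mul0n !mul0r.
have [d ->] : exists d, m = (k.+1 + d)%N by exists (m - k.+1)%N; lia.
have [e ->] : exists e, m0 = (k.+1 + e)%N by exists (m0 - k.+1)%N; lia.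
have -> : (k.+1 + d - k.+1 = d)%N by lia.
case: (ltnP r d) => hr.
  by rewrite !(bin_small hr) (bin_small (leqW hr)) !muln0 ?mul0r ?mulr0 ?mul0r //.
have [s ->] : exists s, r = (d + s)%N by exists (r - d)%N; lia.
have h1 := mul_bin_left (k.+1 + e) k.
have h2 := mul_bin_left (d + s) d.
rewrite (_ : (k.+1 + e - k = e.+1)%N) in h1; last by lia.
rewrite (_ : (d + s - d = s)%N) in h2; last by lia.
move/(congr1 (fun n : nat => n%:R : rat)): h1; rewrite !natrM => h1.
move/(congr1 (fun n : nat => n%:R : rat)): h2; rewrite !natrM => h2.
have he : (e.+1%:R : rat) != 0 by rewrite pnatr_eq0.
have hd : (d.+1%:R : rat) != 0 by rewrite pnatr_eq0.
have c1 : ('C(k.+1 + e, k)%:R : rat) = k.+1%:R * 'C(k.+1 + e, k.+1)%:R / e.+1%:R.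
  by rewrite h1 mulrAC mulfV // mul1r.
have c2 : ('C(d + s, d.+1)%:R : rat) = s%:R * 'C(d + s, d)%:R / d.+1%:R.
  by rewrite -h2 mulrAC mulfV // mul1r.
rewrite c1 c2.
have E1 : 1 + (k.+1 + d)%:R - k.+1%:R = d.+1%:R :> rat.
  by rewrite natrD -[d.+1]addn1 natrD; ring.
have E2 : 1 + (k.+1 + e)%:R - k.+1%:R = e.+1%:R :> rat.
  by rewrite natrD -[e.+1]addn1 natrD; ring.
have E3 : (d + s)%:R + k.+1%:R - (k.+1 + d)%:R = s%:R :> rat.
  by rewrite !natrD; ring.
rewrite E1 E2 E3.
field; rewrite hB /= !(addrC 1) !natr1 !pnatr_eq0 //.
Qed.

Lemma sumF m0 r m :
  (\sum_(k < m.+1) F m0 r m k + 'C(m0, minn m0 m) * 'C(r, m - minn m0 m) = 'C(m0 + r, m))%N.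
Proof.
rewrite -(binomial.Vandermonde m0 r m) big_ord_recl big_ord_recr /= {1}/F /= add0n subnn.
have eF : forall j : 'I_m, F m0 r m (bump 0 j) =
    if (j < m0)%N then ('C(m0, j) * 'C(r, m - j))%N else 0%N.
  move=> j; rewrite /F /bump /= add1n /=.
  by rewrite (_ : (m - j.+1).+1 = m - j)%N //; have := ltn_ord j; lia.
under eq_bigr => j _ do rewrite eF.
case: (leqP m m0) => hmm.
  rewrite subnn; congr (_ + _)%N.
  apply: eq_bigr => j _; rewrite ifT //; exact: leq_trans (ltn_ord j) hmm.
rewrite (bin_small hmm) mul0n addn0.
rewrite (bigD1 (Ordinal hmm)) //= [in RHS](bigD1 (Ordinal hmm)) //= ltnn add0n addnC.
congr (_ + _)%N; apply: eq_bigr => j hj.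
case: ifP => // hj0; rewrite bin_small ?mul0n //.
move: hj hj0; rewrite -val_eqE /= => hj hj0; lia.
Qed.

Theorem mainTheorem4 (m0 r m : nat) (hm : (m <= m0 + r)%N) :
  hyper_expect m0 r m (hyper_g m0 r m) =
    1 - ('C(m0, minn m0 m) * 'C(r, m - minn m0 m))%:R / ('C(m0 + r, m))%:R
  /\ hyper_expect m0 r m (hyper_g m0 r m) <= 1.
Proof.
have hB : ('C(m0 + r, m)%:R : rat) != 0 by rewrite pnatr_eq0 -lt0n bin_gt0.
have E : hyper_expect m0 r m (hyper_g m0 r m) =
    1 - ('C(m0, minn m0 m) * 'C(r, m - minn m0 m))%:R / ('C(m0 + r, m))%:R.
  rewrite /hyper_expect.
  under eq_bigr => k _ do rewrite (term_eq _ _ _ _ hm (ltnSE (ltn_ord k))).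
  rewrite -mulr_suml -natr_sum.
  have := sumF m0 r m; move/(congr1 (fun n : nat => n%:R : rat)); rewrite natrD => hs.
  rewrite -hs in hB *; rewrite -[X in X - _](divff hB) -mulrBl addrK.
  by congr (_ / _); congr (_%:R); apply: eq_bigr.
split=> //; rewrite E lerBlDr lerDl.
by rewrite divr_ge0 ?ler0n.
Qed.
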